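(* Let $Q\subseteq\mathbb R[\mathbf X]$ be a quadratic module. Then $\mathcal L(Q)=\mathcal L\big(\sqrt[\mathbb R]{\operatorname{supp}Q}+Q\big)$. In particular, for every ideal $I\subseteq\sqrt[\mathbb R]{\operatorname{supp}Q}$, $\mathcal L(Q)=\mathcal L\big(\sqrt[\mathbb R]{I}+Q\big)$.
   Context: $\mathbb R[\mathbf X]=\mathbb R[X_1,\dots,X_n]$, $\Sigma^2$ sums of squares. A quadratic module is a set $Q$ with $1\in Q$, $Q+Q\subseteq Q$, $\Sigma^2Q\subseteq Q$; $\operatorname{supp}Q=Q\cap(-Q)$ is an ideal; for an ideal $I$, $I+Q$ is again a quadratic module. For a quadratic module $A$, $\mathcal L(A)=\{\sigma\in\mathbb R[\mathbf X]^*:\sigma(a)\ge0\ \forall a\in A\}$. $\sqrt[\mathbb R]{I}=\{p:\exists m\in\mathbb N, s\in\Sigma^2,\ p^{2m}+s\in I\}$. *)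

(* Defs.v *)
From HB Require Import structures.
From mathcomp Require Import all_boot all_order all_algebra.
From mathcomp Require Import reals.
From mathcomp Require Import mpoly.

Set Implicit Arguments.
Unset Strict Implicit.
Unset Printing Implicit Defensive.

Import Order.TTheory GRing.Theory Num.Theory.
Local Open Scope ring_scope.

Section Defs.
Variables (R : realType) (n : nat).

Definition pset := {mpoly R[n]} -> Prop.

Definition sos (p : {mpoly R[n]}) : Prop :=
  exists s : seq {mpoly R[n]}, p = \sum_(x <- s) x ^+ 2.

Definition quadratic_module (Q : pset) : Prop :=
  [/\ Q 1,
      (forall p q, Q p -> Q q -> Q (p + q)) &
      (forall s q, sos s -> Q q -> Q (s * q))].

Definition is_ideal (I : pset) : Prop :=
  [/\ I 0,
      (forall p q, I p -> I q -> I (p + q)) &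
      (forall r p, I p -> I (r * p))].

Definition supp (Q : pset) : pset := fun p => Q p /\ Q (- p).

Definition real_radical (I : pset) : pset :=
  fun p => exists (m : nat) (s : {mpoly R[n]}), sos s /\ I (p ^+ (2 * m) + s).

Definition pset_add (I Q : pset) : pset :=
  fun p => exists i q, I i /\ Q q /\ p = i + q.

Definition lin_functional (sigma : {mpoly R[n]} -> R) : Prop :=
  forall (a : R) (p q : {mpoly R[n]}), sigma (a *: p + q) = a * sigma p + sigma q.

Definition in_L (A : pset) (sigma : {mpoly R[n]} -> R) : Prop :=
  lin_functional sigma /\ forall a, A a -> 0 <= sigma a.

End Defs.

(* Main.v *)
Require Import Defs.
From mathcomp Require Import all_boot all_order all_algebra.
From mathcomp Require Import reals.
From mathcomp Require Import mpoly.
From mathcomp Require Import ring lra zify.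
Import Order.TTheory GRing.Theory Num.Theory.
Local Open Scope ring_scope.

Section Aux.
Variables (R : realType) (n : nat).
Implicit Types (p q f g : {mpoly R[n]}) (sigma : {mpoly R[n]} -> R).

Lemma lin0 sigma : lin_functional sigma -> sigma 0 = 0.
Proof.
move=> L; have := L 1 0 0; rewrite scale1r addr0 mul1r => h.
have : sigma 0 + sigma 0 - sigma 0 = sigma 0 - sigma 0 by rewrite -h.
by rewrite addrK subrr.
Qed.

Lemma linD sigma p q : lin_functional sigma -> sigma (p + q) = sigma p + sigma q.
Proof. by move=> L; have := L 1 p q; rewrite scale1r mul1r. Qed.

Lemma linZ sigma a p : lin_functional sigma -> sigma (a *: p) = a * sigma p.
Proof. by move=> L; rewrite -[a *: p]addr0 L lin0 // addr0. Qed.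

Lemma linN sigma p : lin_functional sigma -> sigma (- p) = - sigma p.
Proof. by move=> L; rewrite -scaleN1r linZ // mulN1r. Qed.

Lemma sos_sq p : sos (p ^+ 2).
Proof. by exists [:: p]; rewrite big_seq1. Qed.

Lemma Qsos (Q : pset R n) s : quadratic_module Q -> sos s -> Q s.
Proof. by case=> Q1 _ QM hs; rewrite -[s]mulr1; apply: QM. Qed.

Lemma annih (Q : pset R n) sigma f g : quadratic_module Q -> in_L Q sigma ->
  sigma (f ^+ 2) = 0 -> sigma (f * g) = 0.
Proof.
move=> QQ [L pos] hf.
have key t : 0 <= 2 * t * sigma (f * g) + t ^+ 2 * sigma (g ^+ 2).
  have e : (f + t *: g) ^+ 2 = f ^+ 2 + (2 * t) *: (f * g) + (t ^+ 2) *: (g ^+ 2).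
    by rewrite sqrrD exprZn -scalerAr scalerMnl mulr_natl.
  have := pos _ (@Qsos Q _ QQ (sos_sq (f + t *: g))).
  by rewrite e !linD // !linZ // hf add0r.
set a := sigma (f * g); set b := sigma (g ^+ 2).
have b0 : 0 <= b by apply: pos; apply: @Qsos Q _ QQ (sos_sq g).
have c0 : 0 < b + 1 by lra.
have := key (- a / (b + 1)).
set t := - a / (b + 1).
have tc : t * (b + 1) = - a by rewrite /t mulfVK // gt_eqF.
move=> h.
have h2 : 0 <= (2 * t * a + t ^+ 2 * b) * (b + 1) ^+ 2.
  by apply: mulr_ge0 => //; apply: sqr_ge0.
have e : (2 * t * a + t ^+ 2 * b) * (b + 1) ^+ 2
       = 2 * (t * (b + 1)) * a * (b + 1) + (t * (b + 1)) ^+ 2 * b by ring.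
rewrite e tc in h2.
have : a ^+ 2 * (b + 2) <= 0.
  have -> : a ^+ 2 * (b + 2) = - (2 * - a * a * (b + 1) + (- a) ^+ 2 * b) by ring.
  by rewrite oppr_le0.
move=> h3; apply/eqP; rewrite -sqrf_eq0 eq_le sqr_ge0 andbT.
have b2 : 0 < b + 2 by lra.
by rewrite -(pmulr_lle0 _ b2).
Qed.

Lemma key2 (Q : pset R n) sigma p m s : quadratic_module Q -> in_L Q sigma ->
  sos s -> sigma (p ^+ (2 * m) + s) = 0 -> sigma p = 0.
Proof.
move=> QQ [L pos] hs h.
have s0 : 0 <= sigma s by apply: pos; apply: Qsos.
have pm0 : 0 <= sigma (p ^+ (2 * m)).
  by apply: pos; apply: @Qsos Q _ QQ _; rewrite mulnC exprM; apply: sos_sq.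
rewrite linD // in h.
have hm : sigma ((p ^+ m) ^+ 2) = 0 by rewrite -exprM mulnC; lra.
elim: m hm {h pm0} => [|k IH] hk.
  by have := @annih Q sigma _ p QQ (conj L pos) hk; rewrite expr0 mul1r.
have := @annih Q sigma _ (p ^+ k.-1) QQ (conj L pos) hk.
case: k IH hk => [|k] IH hk; first by rewrite expr1 expr0 mulr1.
move=> h; apply: IH; rewrite -exprM -h -exprD; congr (sigma (p ^+ _)).
by rewrite /=; lia.
Qed.

Lemma supp0 (Q : pset R n) sigma x : in_L Q sigma -> supp Q x -> sigma x = 0.
Proof.
move=> [L pos] [h1 h2]; have b := pos _ h1; have a := pos _ h2.
rewrite linN // oppr_ge0 in a; by apply/eqP; rewrite eq_le a b.
Qed.

Lemma sos0 : sos (0 : {mpoly R[n]}).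
Proof. by exists [::]; rewrite big_nil. Qed.

Lemma addL (Q J : pset R n) sigma : quadratic_module Q -> J 0 ->
  (forall x, J x -> in_L Q sigma -> sigma x = 0) ->
  in_L Q sigma <-> in_L (pset_add J Q) sigma.
Proof.
move=> QQ J0 hJ; split.
  move=> [L pos]; split => // a [i [q [Ji [Qq ->]]]].
  by rewrite linD // hJ // add0r; apply: pos.
move=> [L pos]; split => // a Qa; apply: pos; exists 0, a; split => //.
by rewrite add0r.
Qed.

End Aux.

Theorem mainTheorem16 (R : realType) (n : nat) (Q : pset R n) :
  quadratic_module Q ->
  (forall sigma : {mpoly R[n]} -> R,
     in_L Q sigma <-> in_L (pset_add (real_radical (supp Q)) Q) sigma) /\
  (forall I : pset R n, is_ideal I ->
     (forall p, I p -> real_radical (supp Q) p) ->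
     forall sigma : {mpoly R[n]} -> R,
       in_L Q sigma <-> in_L (pset_add (real_radical I) Q) sigma).
Proof.
move=> QQ.
have Q0 : Q 0 by apply: @Qsos Q _ QQ (sos0 R n).
have rad x sigma : real_radical (supp Q) x -> in_L Q sigma -> sigma x = 0.
  move=> [m [s [hs hx]]] hL; apply: (@key2 R n Q sigma x m s QQ hL hs).
  exact: supp0 hL hx.
split.
  move=> sigma; apply: (@addL R n Q _ sigma QQ).
    exists 1%N, 0; split; first exact: sos0.
    by rewrite expr0n /= addr0; split => //; rewrite oppr0.
  by move=> x hx hL; apply: rad hx hL.
move=> I [I0 _ _] hI sigma; apply: (@addL R n Q _ sigma QQ).
  exists 1%N, 0; split; first exact: sos0.
  by rewrite expr0n /= addr0.
move=> x [m [s [hs hx]]] hL; apply: (@key2 R n Q sigma x m s QQ hL hs).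
exact: rad (hI _ hx) hL.
Qed.
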